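(* If $G$ is a connected edge-transitive graph, then for every edge $\{a,b\}$ of $G$ the eigenvalue support of $e_a-e_b$ consists of all the non-zero Laplacian eigenvalues of $G$.
   Context: Let $L=\Delta-A$ be the Laplacian of $G$ with spectral decomposition $L=\sum_r\theta_rE_r$ ($\theta_r$ distinct eigenvalues, $E_r$ orthogonal projections onto eigenspaces). The eigenvalue support of a vector $x$ is the set of $\theta_r$ with $E_rx\neq0$. *)

(* Defs.v *)
From HB Require Import structures.
From mathcomp Require Import all_boot all_order all_algebra all_fingroup.
From mathcomp Require Import reals.
Set Implicit Arguments. Unset Strict Implicit. Unset Printing Implicit Defensive.
Import Order.TTheory GRing.Theory Num.Theory.
Local Open Scope ring_scope.

Definition simple_graph n (e : rel 'I_n) : Prop :=
  symmetric e /\ irreflexive e.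

Definition connected_graph n (e : rel 'I_n) : Prop :=
  forall a b : 'I_n, connect e a b.

Definition is_aut n (e : rel 'I_n) (s : {perm 'I_n}) : Prop :=
  forall x y, e (s x) (s y) = e x y.

Definition edge_transitive n (e : rel 'I_n) : Prop :=
  forall a b c d : 'I_n, e a b -> e c d ->
    exists s : {perm 'I_n}, is_aut e s /\
      ((s a = c /\ s b = d) \/ (s a = d /\ s b = c)).

Definition adjacency (R : realType) n (e : rel 'I_n) : 'M[R]_n :=
  \matrix_(i, j) (e i j)%:R.
Definition degmx (R : realType) n (e : rel 'I_n) : 'M[R]_n :=
  \matrix_(i, j) (if i == j then #|[set k | e i k]|%:R else 0).
Definition laplacian (R : realType) n (e : rel 'I_n) : 'M[R]_n :=
  degmx R e - adjacency R e.

(* Orthogonal projection onto the eigenspace of M for theta, acting on row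
   vectors: projection onto eigenspace M theta along its orthogonal
   complement kermx (eigenspace M theta)^T. *)
Definition eig_proj (R : realType) n (M : 'M[R]_n) (theta : R) : 'M[R]_n :=
  proj_mx (eigenspace M theta) (kermx (eigenspace M theta)^T).

Definition eig_support (R : realType) n (M : 'M[R]_n) (x : 'rV[R]_n) : pred R :=
  fun theta => eigenvalue M theta && (x *m eig_proj M theta != 0).

Definition unitvec (R : realType) n (a : 'I_n) : 'rV[R]_n := delta_mx 0 a.

(* Main.v *)
Require Import Defs.
From HB Require Import structures.
From mathcomp Require Import all_boot all_order all_algebra all_fingroup.
From mathcomp Require Import reals ring.
Import Order.TTheory GRing.Theory Num.Theory.
Local Open Scope ring_scope.

Lemma lapE (R : realType) n (e : rel 'I_n) (v : 'rV[R]_n) i :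
  symmetric e ->
  (v *m laplacian R e) 0 i = \sum_k (e i k)%:R * (v 0 i - v 0 k).
Proof.
move=> sym; rewrite /laplacian mulmxBr mxE.
have -> : (v *m degmx R e) 0 i = v 0 i * #|[set k | e i k]|%:R.
  rewrite !mxE (bigD1 i) //= big1 ?addr0 => [|k /negbTE ki]; rewrite !mxE ?eqxx //.
  by rewrite ki mulr0.
have -> : #|[set k | e i k]|%:R = \sum_k (e i k)%:R :> R.
  rewrite -sum1_card natr_sum big_mkcond /=; apply: eq_bigr => k _.
  by rewrite inE; case: (e i k).
rewrite mulr_sumr !mxE -sumrB; apply: eq_bigr => k _; rewrite !mxE sym.
by rewrite mulrBr !(mulrC (e k i)%:R). Qed.

Lemma lapA (R : realType) n (e : rel 'I_n) (v : 'rV[R]_n) :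
  symmetric e -> (forall c d, e c d -> v 0 c = v 0 d) -> v *m laplacian R e = 0.
Proof.
move=> sym H; apply/rowP => i; rewrite lapE // mxE big1 // => k _.
by case E: (e i k); rewrite ?mul0r // (H _ _ E) subrr mulr0.
Qed.

Lemma lapB (R : realType) n (e : rel 'I_n) (v : 'rV[R]_n) :
  symmetric e -> v *m laplacian R e = 0 -> forall c d, e c d -> v 0 c = v 0 d.
Proof.
move=> sym vL0.
have H1 : \sum_i \sum_k (e i k)%:R * (v 0 i * (v 0 i - v 0 k)) = 0 :> R.
  transitivity (\sum_i v 0 i * (v *m laplacian R e) 0 i).
    apply: eq_bigr => i _; rewrite lapE // mulr_sumr; apply: eq_bigr => k _.
    by rewrite mulrCA.
  by rewrite vL0 big1 // => i _; rewrite mxE mulr0.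
have H2 : \sum_i \sum_k (e i k)%:R * (v 0 k * (v 0 k - v 0 i)) = 0 :> R.
  rewrite exchange_big /= -[RHS]H1; apply: eq_bigr => i _; apply: eq_bigr => k _.
  by rewrite sym.
have H3 : \sum_i \sum_k (e i k)%:R * (v 0 i - v 0 k) ^+ 2 = 0 :> R.
  transitivity ((\sum_i \sum_k (e i k)%:R * (v 0 i * (v 0 i - v 0 k))) +
               \sum_i \sum_k (e i k)%:R * (v 0 k * (v 0 k - v 0 i)) : R);
    last by rewrite H1 H2 addr0.
  rewrite -big_split; apply: eq_bigr => i _; rewrite -big_split; apply: eq_bigr => k _.
  rewrite /= -mulrDr; congr (_ * _); rewrite expr2; ring.
move=> c d ecd.
have P0 : forall i k, 0 <= (e i k)%:R * (v 0 i - v 0 k) ^+ 2 :> R.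
  by move=> i k; rewrite mulr_ge0 // sqr_ge0.
have H4 : \sum_k (e c k)%:R * (v 0 c - v 0 k) ^+ 2 = 0 :> R.
  by apply: (psumr_eq0P _ H3) => // i _; apply: sumr_ge0 => k _.
have : (e c d)%:R * (v 0 c - v 0 d) ^+ 2 = 0 :> R.
  by apply: (psumr_eq0P _ H4).
rewrite ecd mul1r => /eqP; rewrite sqrf_eq0 subr_eq0 => /eqP //.
Qed.

Lemma proj_zero (R : realType) n (M : 'M[R]_n) theta (x : 'rV[R]_n) :
  (x *m eig_proj M theta == 0) = (x *m (eigenspace M theta)^T == 0).
Proof.
rewrite /eig_proj; set U := eigenspace M theta; set V := kermx U^T.
have capUV : (U :&: V = 0)%MS.
  apply/eqP; rewrite -submx0; apply/rV_subP => w wUV.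
  have wU : (w <= U)%MS := submx_trans wUV (capmxSl _ _).
  have /sub_kermxP wV : (w <= V)%MS := submx_trans wUV (capmxSr _ _).
  case/submxP: wU => u wE.
  have ww : w *m w^T = 0 by rewrite {2}wE trmx_mul mulmxA wV mul0mx.
  have S : \sum_k w 0 k ^+ 2 = 0.
    transitivity ((w *m w^T) 0 0); last by rewrite ww mxE.
    by rewrite mxE; apply: eq_bigr => k _; rewrite mxE expr2.
  rewrite submx0; apply/eqP/rowP => k; rewrite mxE.
  have := psumr_eq0P (fun k _ => sqr_ge0 (w 0 k)) S (i:=k) isT.
  by move/eqP; rewrite sqrf_eq0 => /eqP.
have full : (x <= U + V)%MS.
  apply: submx_full; rewrite /row_full mxrank_disjoint_sum // /V mxrank_ker mxrank_tr.
  by rewrite subnKC // rank_leq_col.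
rewrite -[in RHS]sub_kermx -/V; apply/eqP/idP.
  by move=> H; have := proj_mx_compl_sub full; rewrite H subr0.
by move=> xV; exact: proj_mx_0.
Qed.

Lemma xdot (R : realType) n m (a b : 'I_n) (A : 'M[R]_(m, n)) i :
  ((unitvec R a - unitvec R b) *m A^T) 0 i = A i a - A i b.
Proof. by rewrite /unitvec mulmxBl -!rowE !mxE. Qed.

Theorem mainTheorem13 (R : realType) (n : nat) (e : rel 'I_n) :
  simple_graph e -> connected_graph e -> edge_transitive e ->
  forall a b : 'I_n, e a b ->
  forall theta : R,
    eig_support (laplacian R e) (unitvec R a - unitvec R b) theta =
    (eigenvalue (laplacian R e) theta && (theta != 0)).
Proof.
move=> [sym irr] _ et a b eab theta.
rewrite /eig_support; case: (boolP (eigenvalue _ theta)) => //= Eig.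
rewrite proj_zero.
case: (eqVneq theta 0) => [->|th0] /=.
  apply/negbTE/negPn/eqP/rowP => i; rewrite xdot mxE.
  have /eigenspaceP := row_sub i (eigenspace (laplacian R e) 0).
  rewrite scale0r => /lapB => /(_ sym a b eab); rewrite !mxE => ->.
  by rewrite subrr.
apply/eqP => xU0.
case/eigenvalueP: Eig => v vL vn0.
have edges : forall c d, e c d -> v 0 c = v 0 d.
  move=> c d ecd; have [s [auts hs]] := et a b c d eab ecd.
  pose w := \row_j v 0 (s j).
  have wL : w *m laplacian R e = theta *: w.
    apply/rowP => j; rewrite lapE //.
    transitivity ((v *m laplacian R e) 0 (s j)); last by rewrite vL !mxE.
    rewrite lapE // [RHS](reindex_inj (@perm_inj _ s)); apply: eq_bigr => k _.
    by rewrite auts !mxE.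
  have /submxP [u wE] : (w <= eigenspace (laplacian R e) theta)%MS.
    by apply/eigenspaceP.
  have : ((unitvec R a - unitvec R b) *m w^T) 0 0 = 0.
    by rewrite wE trmx_mul mulmxA xU0 mul0mx mxE.
  rewrite xdot !mxE => /eqP; rewrite subr_eq0 => /eqP.
  by case: hs => [[-> ->]|[-> ->]] // ->.
have := @lapA R n e v sym edges; rewrite vL => /eqP; rewrite scaler_eq0 (negbTE vn0) orbF.
by move/eqP; apply/eqP.
Qed.
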